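(* Let $A=\{z\in\mathbb{C}:\operatorname{Re}z>0\}$ and let $P,Q,Q_1$ be polynomials in one complex variable, with $P$ not vanishing on $A$. If $Q(w)+P(w)vQ_1(w)\ne0$ for all $v,w\in A$, then either $S(z)=Q(z)+P(z)Q_1'(z)\ne0$ for all $z\in A$, or $S\equiv0$. *)

(* Defs.v *)
(* complex numbers are R[i] (mathcomp-real-closed complex.v)
   over Stdlib's real numbers R (an rcfType via Rstruct), i.e. genuinely C. *)
From HB Require Import structures.
From mathcomp Require Import all_boot all_order all_algebra.
From mathcomp Require Import complex Rstruct.
From Stdlib Require Import Reals.
Set Implicit Arguments. Unset Strict Implicit. Unset Printing Implicit Defensive.
Import Order.TTheory GRing.Theory Num.Theory.

Notation CC := (Rdefinitions.R[i]).

Definition in_A (z : CC) : Prop := (0 < complex.Re z)%R.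

(* Main.v *)
Require Import Defs.
From HB Require Import structures.
From mathcomp Require Import all_boot all_order all_algebra.
From mathcomp Require Import complex Rstruct.
From Stdlib Require Import Reals.
From mathcomp Require Import ring lra.
Import Order.TTheory GRing.Theory Num.Theory.
Local Open Scope ring_scope.

Lemma poly_lip (C : numClosedFieldType) (p : {poly C}) (z0 : C) :
  exists M, 0 <= M /\ forall h, `|h| <= 1 -> `|p.[z0 + h] - p.[z0]| <= M * `|h|.
Proof.
elim/poly_ind: p => [|p c [M [M0 HM]]].
  by exists 0; split => // h _; rewrite !horner0 subrr normr0 mul0r.
exists (M * (`|z0| + 1) + `|p.[z0]|); split.
  by rewrite addr_ge0 // mulr_ge0 // addr_ge0.
move=> h h1; rewrite !hornerE.
have -> : p.[z0 + h] * (z0 + h) + c - (p.[z0] * z0 + c)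
   = (p.[z0 + h] - p.[z0]) * (z0 + h) + p.[z0] * h by ring.
apply: le_trans (ler_normD _ _) _.
rewrite !normrM mulrDl; apply: lerD; last by [].
rewrite mulrAC; apply: ler_pM => //; first exact: HM.
by apply: le_trans (ler_normD _ _) _; rewrite lerD.
Qed.

Lemma poly_bnd (C : numClosedFieldType) (p : {poly C}) (z0 : C) :
  exists M, 0 <= M /\ forall h, `|h| <= 1 -> `|p.[z0 + h]| <= M.
Proof.
have [M [M0 HM]] := poly_lip _ p z0.
exists (`|p.[z0]| + M); split; first by rewrite addr_ge0.
move=> h h1; have -> : p.[z0 + h] = p.[z0] + (p.[z0 + h] - p.[z0]) by ring.
apply: le_trans (ler_normD _ _) _; rewrite lerD //.
by apply: le_trans (HM h h1) _; rewrite ler_piMr.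
Qed.

Lemma Re_le_norm (C : numClosedFieldType) (z : C) : 'Re z <= `|z|.
Proof. by case: (leif_Re_Creal z). Qed.

Lemma Re_real_mul (C : numClosedFieldType) (t z : C) : t \is Num.real ->
  'Re (t * z) = t * 'Re z.
Proof. by move=> tr; rewrite ReMl. Qed.

Lemma re_neg_conj {C : numClosedFieldType} (x y : C) :
  'Re (x * y^*) < 0 -> y != 0 /\ 0 < 'Re (- x / y).
Proof.
move=> H; have y0 : y != 0.
  by apply/eqP => y0; move: H; rewrite y0 conjC0 mulr0 raddf0 ltxx.
split => //.
rewrite invC_norm mulrCA mulNr mulrN raddfN /=. rewrite Re_real_mul; last first.
  by rewrite realV realX // normr_real.
rewrite oppr_gt0 pmulr_rlt0 // invr_gt0 exprn_gt0 // normr_gt0 //.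
Qed.

Lemma Re_conj_sym (C : numClosedFieldType) (x y : C) :
  'Re (x * y^*) = 'Re (y * x^*).
Proof. by rewrite -Re_conj (rmorphM Num.conj_op) /= conjCK mulrC. Qed.

Lemma ltD1 (C : numClosedFieldType) (D a : C) : 0 < D -> 0 <= a -> a < D -> D^-1 * a < 1.
Proof.
move=> D0 a0 aD; rewrite -(mulVf (lt0r_neq0 D0)).
by rewrite ltr_pM2l // invr_gt0.
Qed.

Lemma keyK {C : numClosedFieldType} (f q : {poly C}) (z0 : C) :
  0 < 'Re z0 -> f != 0 -> root f z0 -> q.[z0] != 0 ->
  exists w, 0 < 'Re w /\ 'Re (f.[w] * (q.[w])^*) < 0.
Proof.
move=> Rz0 f0 rf q0.
have [m [F /implyP/(_ f0) RF ef]] := multiplicity_XsubC f z0.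
have m0 : (0 < m)%nat.
  case: m ef => // ef; move: rf; rewrite ef expr0 mulr1 => rF.
  by rewrite rF in RF.
have F0 : F.[z0] != 0 by [].
set b := F.[z0] * (q.[z0])^*.
have b0 : b != 0 by rewrite mulf_neq0 // conjC_eq0.
set u := m.-root (- b^*).
have um : u ^+ m = - b^* by rewrite /u rootCK.
have [MF [MF0 HF]] := poly_lip _ F z0.
have [Mq [Mq0 Hq]] := poly_lip _ q z0.
set K0 := MF * (`|q.[z0]| + Mq) + `|F.[z0]| * Mq.
have K00 : 0 <= K0 by rewrite addr_ge0 ?mulr_ge0 ?addr_ge0.
have Hdiff : forall h, `|h| <= 1 ->
    `|F.[z0+h] * (q.[z0+h])^* - b| <= K0 * `|h|.
  move=> h h1.
  have -> : F.[z0+h] * (q.[z0+h])^* - b =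
     (F.[z0+h] - F.[z0]) * (q.[z0+h])^* + F.[z0] * (q.[z0+h] - q.[z0])^*.
    by rewrite rmorphB /b; ring.
  apply: le_trans (ler_normD _ _) _.
  rewrite !normrM !norm_conjC mulrDl; apply: lerD.
    rewrite mulrAC; apply: ler_pM => //; first exact: HF.
    have -> : q.[z0 + h] = q.[z0] + (q.[z0 + h] - q.[z0]) by ring.
    apply: le_trans (ler_normD _ _) _; rewrite lerD //.
    by apply: le_trans (Hq h h1) _; rewrite ler_piMr.
  by rewrite -mulrA; apply: ler_pM => //; apply: Hq.
set beta := `|b| ^+ 2.
have beta0 : 0 < beta by rewrite exprn_gt0 // normr_gt0.
set a1 := `|u|.
set a2 := `|u| / 'Re z0.
set a3 := `|u| ^+ m.+1 * K0 / beta.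
have a20 : 0 <= a2 by rewrite divr_ge0 // ltW.
have a30 : 0 <= a3 by rewrite /a3 divr_ge0 ?(ltW beta0) // mulr_ge0 // exprn_ge0.
set D := 1 + a1 + a2 + a3.
have a10 : 0 <= a1 by rewrite /a1.
have D0 : 0 < D by rewrite /D; apply: (lt_le_trans ltr01); rewrite -!addrA lerDl !addr_ge0.
set t := D^-1.
have t0 : 0 < t by rewrite invr_gt0.
have tr : t \is Num.real by rewrite gtr0_real.
have Hlt : forall x, 0 <= x -> x <= a1 + a2 + a3 -> t * x < 1.
  move=> x x0 xa; apply: ltD1 => //.
  have -> : D = 1 + (a1 + a2 + a3) by rewrite /D !addrA.
  apply: le_lt_trans xa _; by rewrite ltrDr ltr01.
have h1 : t * a1 < 1.
  by apply: Hlt => //; rewrite -addrA lerDl addr_ge0.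
have h2 : t * a2 < 1.
  apply: Hlt => //; apply: (@le_trans _ _ (a1 + a2)); by rewrite ?lerDr ?lerDl.
have h3 : t * a3 < 1.
  by apply: Hlt => //; rewrite lerDr addr_ge0.
have ntu : `|t * u| = t * a1 by rewrite normrM gtr0_norm.
exists (z0 + t * u); split.
  rewrite raddfD /= Re_real_mul //.
  have Hu : - a1 <= 'Re u.
    by rewrite lerNl -raddfN /a1 -normrN Re_le_norm.
  have : t * a1 < 'Re z0.
    move: h2; rewrite /a2 mulrA ltr_pdivrMr // mul1r //.
  move=> H; apply: lt_le_trans (_ : 0 < 'Re z0 - t * a1) _.
    by rewrite subr_gt0.
  by rewrite lerD2l -mulrN ler_pM2l.
rewrite ef hornerM horner_exp hornerXsubC addrAC subrr add0r.
set E := F.[z0 + t * u] * (q.[z0 + t * u])^* - b.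
have HE : `|E| <= K0 * (t * a1) by rewrite -ntu; apply: Hdiff; rewrite ntu ltW.
have -> : F.[z0 + t * u] * (t * u) ^+ m * (q.[z0 + t * u])^* =
   t ^+ m * (- beta + u ^+ m * E).
  have bb : b * b^* = - (u ^+ m * b) by rewrite um mulNr opprK mulrC.
  rewrite /E /beta normCK bb /b exprMn; ring.
rewrite Re_real_mul ?realX // pmulr_rlt0 ?exprn_gt0 //.
rewrite raddfD /= raddfN /= (Creal_ReP _ _) ?realX ?normr_real //.
rewrite addrC subr_lt0; apply: le_lt_trans (Re_le_norm _ _) _.
rewrite normrM normrX; apply: le_lt_trans (ler_wpM2l _ HE) _.
  by rewrite exprn_ge0.
move: h3; rewrite /a3 mulrA ltr_pdivrMr // mul1r.
apply: le_lt_trans; rewrite /a1 exprSr le_eqVlt; apply/orP; left; apply/eqP; ring.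
Qed.
Lemma in_AE (z : CC) : in_A z <-> 0 < 'Re z.
Proof. rewrite /in_A -complexRe. have -> : (0 : CC) = ((0 : Rdefinitions.R)%:C)%C by []. by rewrite ltcR; split => /RltP. Qed.

Lemma logder {C : numClosedFieldType} (s : seq C) (w : C) :
  (forall a, a \in s -> 'Re a < 'Re w) ->
  (\prod_(a <- s) ('X - a%:P)).[w] != 0 /\
  0 <= 'Re ((\prod_(a <- s) ('X - a%:P))^`().[w] / (\prod_(a <- s) ('X - a%:P)).[w]) /\
  (s != [::] -> 0 < 'Re ((\prod_(a <- s) ('X - a%:P))^`().[w] / (\prod_(a <- s) ('X - a%:P)).[w])).
Proof.
elim: s => [|a s IH] H.
  by rewrite big_nil derivC horner0 mul0r raddf0 hornerC oner_eq0.
have [ps0 [ge IHs]] : _ := IH (fun b bs => H b ltac:(by rewrite inE bs orbT)).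
have Ha : 'Re a < 'Re w by apply: H; rewrite inE eqxx.
set ps := \prod_(b <- s) ('X - b%:P) in ps0 ge IHs *.
rewrite big_cons -/ps derivM derivXsubC mul1r !hornerE.
have wa : w - a != 0.
  by apply/eqP => wa; move: Ha; rewrite -subr_gt0 -raddfB /= wa raddf0 ltxx.
have -> : (ps.[w] + (w - a) * ps^`().[w]) / ((w - a) * ps.[w]) =
    (w - a)^-1 + ps^`().[w] / ps.[w].
  rewrite mulrDl invfM mulrCA divff // mulr1 -mulrA mulrCA mulrA mulrC.
  by congr (_ + _); rewrite mulrC -!mulrA mulVKf.
have Rpos : 0 < 'Re ((w - a)^-1).
  rewrite ReV divr_gt0 // ?exprn_gt0 ?normr_gt0 //.
  by rewrite raddfB subr_gt0.
split; first by rewrite mulf_neq0.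
rewrite raddfD /=; split; first by rewrite addr_ge0 // ltW.
by move=> _; rewrite ltr_pwDl.
Qed.

Theorem lemma2p3 (P Q Q1 : {poly CC}) :
  (forall z : CC, in_A z -> P.[z] != 0) ->
  (forall v w : CC, in_A v -> in_A w -> Q.[w] + P.[w] * v * Q1.[w] != 0) ->
  (forall z : CC, in_A z -> (Q + P * Q1^`()).[z] != 0) \/ Q + P * Q1^`() = 0.
Proof.
move=> HP H.
have A1 : in_A 1 by apply/in_AE; rewrite (Creal_ReP _ _) ?real1 // ltr01.
have Hneg : forall w, in_A w -> 'Re (Q.[w] * (P.[w] * Q1.[w])^*) < 0 -> False.
  move=> w Aw Hr; have [y0 Hv] := re_neg_conj _ _ Hr.
  have /negP := H (- Q.[w] / (P.[w] * Q1.[w])) w (proj2 (in_AE _) Hv) Aw.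
  apply; apply/eqP.
  by rewrite mulrAC [_ * _ * (_ / _)]mulrC divfK // addrN.
have HQ1 : forall w, in_A w -> Q1.[w] = 0 -> Q.[w] != 0.
  by move=> w Aw Q1w; have := H 1 w A1 Aw; rewrite Q1w mulr0 addr0.
set S := Q + P * Q1^`().
case: (eqVneq S 0) => [->|S0]; [by right | left].
move=> z0 Az0; apply/negP => /eqP Sz0.
have Rz0 := proj1 (in_AE _) Az0.
case: (eqVneq Q1 0) => [Q10|Q10].
  move: Sz0; rewrite /S Q10 derivC mulr0 addr0 => Qz0.
  by move: (HQ1 z0 Az0); rewrite Q10 horner0 Qz0 eqxx => /(_ erefl).
have P0 : P != 0 by apply/eqP => P0; move: (HP _ Az0); rewrite P0 horner0 eqxx.
have Cl1 : forall w1, in_A w1 -> Q1.[w1] != 0.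
  move=> w1 Aw1; apply/negP => /eqP Q1w1.
  have Qw1 := HQ1 w1 Aw1 Q1w1.
  have rf : root (P * Q1) w1 by rewrite rootE hornerM Q1w1 mulr0.
  have [w [Rw Hw]] := keyK _ _ _ (proj1 (in_AE _) Aw1) (mulf_neq0 P0 Q10) rf Qw1.
  apply: (Hneg w (proj2 (in_AE _) Rw)).
  by rewrite Re_conj_sym -hornerM.
case: (leqP (size Q1) 1) => [sQ1|sQ1].
  have [c Ec] : exists c, Q1 = c%:P by exists Q1`_0; apply: size1_polyC.
  move: Sz0; rewrite /S Ec derivC mulr0 addr0 => Qz0.
  have Q0 : Q != 0 by move: S0; rewrite /S Ec derivC mulr0 addr0.
  have qz0 : (P * Q1).[z0] != 0 by rewrite hornerM mulf_neq0 ?HP ?Cl1.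
  have [w [Rw Hw]] := keyK _ _ _ Rz0 Q0 (introT eqP Qz0) qz0.
  apply: (Hneg w (proj2 (in_AE _) Rw)).
  by rewrite -hornerM.
have [rs Ers] := closed_field_poly_normal Q1.
have lc0 : lead_coef Q1 != 0 by rewrite lead_coef_eq0.
have rs0 : rs != [::].
  apply/eqP => rs0; move: sQ1; rewrite Ers rs0 big_nil size_scale //.
  by rewrite size_poly1.
set pr := \prod_(z <- rs) ('X - z%:P) in Ers.
have Hrs : forall a, a \in rs -> 'Re a < 'Re z0.
  move=> a ars.
  have Q1a : Q1.[a] = 0.
    rewrite Ers hornerZ.
    have : root pr a by rewrite root_prod_XsubC.
    by rewrite rootE => /eqP ->; rewrite mulr0.
  have nA : ~ in_A a by move=> Aa; move: (Cl1 a Aa); rewrite Q1a eqxx.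
  have : 'Re a <= 0.
    rewrite real_leNgt ?Creal_Re ?real0 //; apply/negP => Ha; apply: nA.
    exact: (proj2 (in_AE _) Ha).
  by move=> Ha; apply: le_lt_trans Ha Rz0.
have [pr0 [_ Hpos]] := logder _ _ Hrs.
have Hp := Hpos rs0.
have Av : in_A (Q1^`().[z0] / Q1.[z0]).
  apply/in_AE; move: Hp; rewrite Ers derivZ !hornerZ invfM mulrACA divff // mul1r.
  by rewrite -/pr.
have /negP := H _ z0 Av Az0; apply; apply/eqP.
by rewrite -mulrA divfK ?Cl1 // -hornerM -hornerD.
Qed.
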